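(* Assume all struts are straight, let $k\ge0$ and $n=k+1$. Then there exists a constant $k_d>0$ (possibly depending on $V_k$ and $M_n$) such that \[ \inf_{\psi\in M_n\setminus\{0\}}\ \sup_{\Sigma\in V_k\setminus\{0\}}\frac{b(\Sigma,\psi)}{\|\Sigma\|_{V}\|\psi\|_{M}}\ge k_d . \]
   Context: Network: a stent is modelled by a finite connected graph with vertices $j=1,\dots,n_{\mathcal V}$ and oriented edges $i=1,\dots,n_{\mathcal E}$. $J_j^-$ ($J_j^+$) is the set of edges leaving (entering) vertex $j$. Edge $i$ is a straight segment of length $\ell^i>0$, parametrized by $\Phi^i(s)=\Phi^i(0)+s\,t^i$, $s\in[0,\ell^i]$, with constant unit tangent $t^i$; $s=0$ at the vertex it leaves, $s=\ell^i$ at the vertex it enters. Matrices: $A^+_{I}\in\mathbb{R}^{3n_{\mathcal V}\times 3n_{\mathcal E}}$ has $3\times3$ block $I_3$ in block row $j$, block column $i$ if $i\in J_j^+$ and $0$ otherwise; $A^-_I$ likewise with $J_j^-$. Spaces: $L^2(\mathcal N;\mathbb{R}^3)=\prod_iL^2(0,\ell^i;\mathbb{R}^3)$, $L^2_{H^1}(\mathcal N;\mathbb{R}^3)=\prod_iH^1(0,\ell^i;\mathbb{R}^3)$, product norms; $\int_{\mathcal N}v=\sum_i\int_0^{\ell^i}v^i\,ds$. $V=L^2(\mathcal N;\mathbb{R}^3)^2\times(\mathbb{R}^{3n_{\mathcal E}})^4\times\mathbb{R}^3\times\mathbb{R}^3$ with elements $\Sigma=(q,p,P_+,P_-,Q_+,Q_-,\alpha,\beta)$,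 $M=L^2_{H^1}(\mathcal N;\mathbb{R}^3)^2\times\mathbb{R}^{3n_{\mathcal V}}\times\mathbb{R}^{3n_{\mathcal V}}$ with elements $\psi=(v,w,V,W)$, product Hilbert norms. $P_m(\mathcal N)$ = functions that on each edge are polynomials of degree at most $m$ (no continuity at vertices); $V_k=P_k(\mathcal N)^3\times P_k(\mathcal N)^3\times(\mathbb{R}^{3n_{\mathcal E}})^4\times\mathbb{R}^3\times\mathbb{R}^3\subset V$, $M_n=P_n(\mathcal N)^3\times P_n(\mathcal N)^3\times\mathbb{R}^{3n_{\mathcal V}}\times\mathbb{R}^{3n_{\mathcal V}}\subset M$ with the induced norms. $b(\Sigma,\psi)=\sum_i\int_0^{\ell^i}\big(-p^i\cdot(\partial_sv^i+t^i\times w^i)-q^i\cdot\partial_sw^i\big)ds+\sum_i\big(P^i_+\cdot v^i(\ell^i)-P^i_-\cdot v^i(0)\big)+\sum_i\big(Q^i_+\cdot w^i(\ell^i)-Q^i_-\cdot w^i(0)\big)-(A^+_IP_+-A^-_IP_-)\cdot V-(A^+_IQ_+-A^-_IQ_-)\cdot W+\alpha\cdot\int_{\mathcal N}v+\beta\cdot\int_{\mathcal N}w$. *)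

(* Defs.v *)
From HB Require Import structures.
From mathcomp Require Import all_boot all_order all_algebra.
From mathcomp Require Import all_classical all_reals all_analysis.
Set Implicit Arguments. Unset Strict Implicit. Unset Printing Implicit Defensive.
Import Order.TTheory GRing.Theory Num.Theory.
Import numFieldNormedType.Exports.
Local Open Scope classical_set_scope.
Local Open Scope ring_scope.

Section Stent.
Variable R : realType.

Definition dot3 (u v : 'rV[R]_3) : R := \sum_(c < 3) u 0 c * v 0 c.
Definition cross3 (u v : 'rV[R]_3) : 'rV[R]_3 :=
  let x := fun j : nat => u 0 (inord j) in
  let y := fun j : nat => v 0 (inord j) in
  \row_(c < 3) [:: x 1%N * y 2%N - x 2%N * y 1%N;
                   x 2%N * y 0%N - x 0%N * y 2%N;
                   x 0%N * y 1%N - x 1%N * y 0%N]`_c.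
Definition sqn3 (u : 'rV[R]_3) : R := dot3 u u.

Definition vpoly := 'I_3 -> {poly R}.
Definition veval (f : vpoly) (s : R) : 'rV[R]_3 := \row_(c < 3) (f c).[s].
Definition vderiv (f : vpoly) : vpoly := fun c => (f c)^`().
Definition vdeg_le (m : nat) (f : vpoly) : Prop := forall c, (size (f c) <= m.+1)%N.

Definition Int0 (l : R) (g : R -> R) : R :=
  \int[@lebesgue_measure R]_(s in `[0, l]) g s.
Definition vInt0 (l : R) (f : vpoly) : 'rV[R]_3 :=
  \row_(c < 3) Int0 l (fun s => (f c).[s]).
Definition L2sq (l : R) (f : vpoly) : R := Int0 l (fun s => sqn3 (veval f s)).
Definition H1sq (l : R) (f : vpoly) : R := L2sq l f + L2sq l (vderiv f).

Record Vel (nE : nat) := mkVel {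
  Vq : 'I_nE -> vpoly; Vp : 'I_nE -> vpoly;
  VPp : 'I_nE -> 'rV[R]_3; VPm : 'I_nE -> 'rV[R]_3;
  VQp : 'I_nE -> 'rV[R]_3; VQm : 'I_nE -> 'rV[R]_3;
  Valpha : 'rV[R]_3; Vbeta : 'rV[R]_3 }.

Record Mel (nV nE : nat) := mkMel {
  Mv : 'I_nE -> vpoly; Mw : 'I_nE -> vpoly;
  MV : 'I_nV -> 'rV[R]_3; MW : 'I_nV -> 'rV[R]_3 }.

Definition in_Vk (k : nat) nE (S : Vel nE) : Prop :=
  forall i, vdeg_le k (Vq S i) /\ vdeg_le k (Vp S i).
Definition in_Mn (n : nat) nV nE (P : Mel nV nE) : Prop :=
  forall i, vdeg_le n (Mv P i) /\ vdeg_le n (Mw P i).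

Definition Vzero nE (S : Vel nE) : Prop :=
  (forall i c, Vq S i c = 0) /\ (forall i c, Vp S i c = 0) /\
  (forall i, VPp S i = 0) /\ (forall i, VPm S i = 0) /\
  (forall i, VQp S i = 0) /\ (forall i, VQm S i = 0) /\
  Valpha S = 0 /\ Vbeta S = 0.
Definition Mzero nV nE (P : Mel nV nE) : Prop :=
  [/\ forall i c, Mv P i c = 0, forall i c, Mw P i c = 0,
      forall j, MV P j = 0 & forall j, MW P j = 0].

Definition normV nE (ell : 'I_nE -> R) (S : Vel nE) : R :=
  Num.sqrt (\sum_i (L2sq (ell i) (Vq S i) + L2sq (ell i) (Vp S i))
          + \sum_i (sqn3 (VPp S i) + sqn3 (VPm S i) + sqn3 (VQp S i) + sqn3 (VQm S i))
          + sqn3 (Valpha S) + sqn3 (Vbeta S)).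
Definition normM nV nE (ell : 'I_nE -> R) (P : Mel nV nE) : R :=
  Num.sqrt (\sum_i (H1sq (ell i) (Mv P i) + H1sq (ell i) (Mw P i))
          + \sum_j (sqn3 (MV P j) + sqn3 (MW P j))).

(* src i = vertex edge i leaves (i in J^-_{src i}), tgt i = vertex it enters (i in J^+_{tgt i}) *)
Definition Aplus nV nE (tgt : 'I_nE -> 'I_nV) (P : 'I_nE -> 'rV[R]_3) (j : 'I_nV) :=
  \sum_(i | tgt i == j) P i.
Definition Aminus nV nE (src : 'I_nE -> 'I_nV) (P : 'I_nE -> 'rV[R]_3) (j : 'I_nV) :=
  \sum_(i | src i == j) P i.

Definition bform nV nE (src tgt : 'I_nE -> 'I_nV) (ell : 'I_nE -> R)
    (t : 'I_nE -> 'rV[R]_3) (S : Vel nE) (P : Mel nV nE) : R :=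
  \sum_i Int0 (ell i) (fun s =>
      - dot3 (veval (Vp S i) s)
             (veval (vderiv (Mv P i)) s + cross3 (t i) (veval (Mw P i) s))
      - dot3 (veval (Vq S i) s) (veval (vderiv (Mw P i)) s))
  + \sum_i (dot3 (VPp S i) (veval (Mv P i) (ell i)) - dot3 (VPm S i) (veval (Mv P i) 0))
  + \sum_i (dot3 (VQp S i) (veval (Mw P i) (ell i)) - dot3 (VQm S i) (veval (Mw P i) 0))
  - \sum_j dot3 (Aplus tgt (VPp S) j - Aminus src (VPm S) j) (MV P j)
  - \sum_j dot3 (Aplus tgt (VQp S) j - Aminus src (VQm S) j) (MW P j)
  + dot3 (Valpha S) (\sum_i vInt0 (ell i) (Mv P i))
  + dot3 (Vbeta S) (\sum_i vInt0 (ell i) (Mw P i)).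

Definition adj nV nE (src tgt : 'I_nE -> 'I_nV) : rel 'I_nV :=
  fun u v => [exists i, ((src i == u) && (tgt i == v)) || ((src i == v) && (tgt i == u))].
Definition graph_connected nV nE (src tgt : 'I_nE -> 'I_nV) : Prop :=
  forall u v, connect (adj src tgt) u v.

(* straight struts: edge i is the segment Phi^i(s) = X(src i) + s t^i, s in [0, ell i],
   with unit tangent t^i, ell i > 0, ending at X(tgt i) *)
Definition straight_struts nV nE (src tgt : 'I_nE -> 'I_nV) (X : 'I_nV -> 'rV[R]_3)
    (ell : 'I_nE -> R) (t : 'I_nE -> 'rV[R]_3) : Prop :=
  forall i, [/\ 0 < ell i, sqn3 (t i) = 1 & X (tgt i) = X (src i) + ell i *: t i].

Definition sup_ratio (k : nat) nV nE (src tgt : 'I_nE -> 'I_nV) (ell : 'I_nE -> R)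
    (t : 'I_nE -> 'rV[R]_3) (P : Mel nV nE) : \bar R :=
  ereal_sup [set ((bform src tgt ell t S P) / (normV ell S * normM ell P))%:E
            | S in [set S : Vel nE | in_Vk k S /\ ~ Vzero S]].

End Stent.

(* Main.v *)
Require Import Defs.
From HB Require Import structures.
From mathcomp Require Import all_boot all_order all_algebra.
From mathcomp Require Import all_classical all_reals all_analysis.
From mathcomp Require Import lra ring.
Import Order.TTheory GRing.Theory Num.Theory.
Import numFieldNormedType.Exports.
Local Open Scope classical_set_scope.
Local Open Scope ring_scope.
Set Implicit Arguments. Unset Strict Implicit.

Section Integrals.
Variable R : realType.
Notation mu := (@lebesgue_measure R).

Definition Ip (l : R) (p : {poly R}) : R := Int0 l (horner p).

Lemma int_poly (l : R) (p : {poly R}) : mu.-integrable `[0, l] (EFin \o horner p).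
Proof.
apply: continuous_compact_integrable; first exact: segment_compact.
apply: continuous_subspaceT => x; exact: continuous_horner.
Qed.

Lemma Int0_ext (l : R) (f g : R -> R) : (forall s, f s = g s) -> Int0 l f = Int0 l g.
Proof. by move=> fg; congr Int0; apply/funext. Qed.

Lemma IpD l p q : Ip l (p + q) = Ip l p + Ip l q.
Proof.
rewrite /Ip /Int0 -RintegralD //; try exact: int_poly.
by apply: eq_Rintegral => x _; rewrite hornerD.
Qed.

Lemma IpZ l a p : Ip l (a *: p) = a * Ip l p.
Proof.
rewrite /Ip /Int0 -RintegralZl //; try exact: int_poly.
by apply: eq_Rintegral => x _; rewrite hornerZ.
Qed.

Lemma Ip_is_linear l : linear (Ip l).
Proof. by move=> a p q; rewrite IpD IpZ. Qed.

HB.instance Definition _ l := GRing.isLinear.Build R {poly R} R *%R (Ip l) (Ip_is_linear l).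

Lemma IpN l p : Ip l (- p) = - Ip l p.
Proof. by rewrite -scaleN1r IpZ mulN1r. Qed.
Lemma Ip0 l : Ip l 0 = 0.
Proof. by rewrite -(scale0r (0 : {poly R})) IpZ mul0r. Qed.
Lemma IpB l p q : Ip l (p - q) = Ip l p - Ip l q.
Proof. by rewrite IpD IpN. Qed.
Lemma Ip_sum l (I : Type) (r : seq I) (Pr : pred I) (F : I -> {poly R}) :
  Ip l (\sum_(i <- r | Pr i) F i) = \sum_(i <- r | Pr i) Ip l (F i).
Proof. by apply: (big_morph (Ip l)); [exact: IpD | exact: Ip0]. Qed.

Lemma IpC l c : 0 <= l -> Ip l c%:P = c * l.
Proof.
move=> l0; rewrite /Ip /Int0.
under eq_Rintegral do rewrite hornerC.
rewrite Rintegral_cst //= lebesgue_measure_itv /= lte_fin.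
case: ltP => [_|]; first by rewrite /= oppr0 addr0.
by move=> h; have -> : l = 0 by apply/eqP; rewrite eq_le l0 h.
Qed.

Lemma Ip_le l p q : (forall s, 0 <= s <= l -> p.[s] <= q.[s]) -> Ip l p <= Ip l q.
Proof.
move=> H; rewrite /Ip /Int0; apply: le_Rintegral => //; try exact: int_poly.

Qed.

Lemma Ip_ge0 l p : (forall s, 0 <= s <= l -> 0 <= p.[s]) -> 0 <= Ip l p.
Proof.
move=> H; rewrite /Ip /Int0; apply: Rintegral_ge0 => x.
by rewrite /= in_itv /= => /andP[a b]; apply: H; rewrite a b.
Qed.


Lemma Ip_sq_eq0 l p : 0 < l -> Ip l (p * p) = 0 -> p = 0.
Proof.
move=> l0 I0; apply/eqP/negPn/negP => p0.
set rs := [seq l / (m.+2)%:R | m <- iota 0 (size p)].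
have urs : uniq rs.
  rewrite map_inj_in_uniq ?iota_uniq // => a b _ _ H.
  have ln0 : l != 0 by rewrite gt_eqF.
  move: H => /(mulfI ln0)/invr_inj/eqP; rewrite eqr_nat => /eqP; by case.
have : ~~ all (root p) rs.
  by apply/negP => /(max_poly_roots p0)/(_ urs); rewrite size_map size_iota ltnn.
case/allPn => s1 /mapP[m _ ->] {s1}; set s0 := l / _ => ps0.
have s0pos : 0 < s0 by rewrite divr_gt0 // ltr0n.
have s0l : s0 < l.
  by rewrite /s0 ltr_pdivrMr ?ltr0n // ltr_pMr // ltr1n.
set c := (p * p).[s0].
have c0 : 0 < c.
  rewrite /c hornerM lt0r mulf_neq0 //= -expr2 sqr_ge0 //.
have := @continuous_horner _ (p * p) s0.
move=> /cvgrPdist_lt /(_ (c/2)) []; first by lra.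
move=> d /= d0 Hd.
have Hlow : forall s, `|s0 - s| < d -> c/2 < (p * p).[s].
  move=> s hs; have := Hd s hs; rewrite /= ltr_norml => /andP[_ h].
  rewrite -/c in h; lra.
set e := Num.min (d/2) (Num.min s0 (l - s0)).
have e0 : 0 < e by rewrite /e !lt_min; apply/and3P; split; lra.
have ed : e <= d/2 by rewrite /e ge_min lexx.
have es0 : e <= s0 by rewrite /e !ge_min lexx orbT.
have esl : e <= l - s0 by rewrite /e !ge_min lexx !orbT.
case/integrableP: (int_poly l (p * p)) => mf _.
have sub : `[s0 - e, s0 + e] `<=` `[0, l].
  move=> x; rewrite /= !in_itv /= => /andP[a b]; apply/andP; split; lra.
pose A : set R := `[0, l]%classic.
pose B : set R := `[s0 - e, s0 + e]%classic.
have key : (((c/2) * ((s0 + e) - (s0 - e)))%:E <=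
    \int[mu]_(x in A) (EFin \o horner (p * p)) x)%E.
  have f0 : forall x : R, A x -> (0 <= (EFin \o horner (p * p)) x)%E.
    by move=> x _; rewrite /= lee_fin hornerM -expr2 sqr_ge0.
  apply: le_trans (ge0_subset_integral mu (measurable_itv _) (measurable_itv _) mf f0 sub).
  have -> : ((c/2) * ((s0 + e) - (s0 - e)))%:E =
      (\int[mu]_(x in B) cst (c/2)%:E x)%E.
    rewrite integral_cst //.
    transitivity ((c/2)%:E * ((s0+e)-(s0-e))%:E)%E; first by [].
    congr (_ * _)%E.
    apply/esym; apply: eq_trans; first exact: lebesgue_measure_itv.
    rewrite /= lte_fin.
    have -> : (s0 - e < s0 + e) = true by apply/idP; lra.
    by rewrite -EFinD.
  exact: measurable_itv.
  apply: (ge0_le_integral mu (measurable_itv _)) => //.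
  - by move=> x _; rewrite /= lee_fin; lra.
  - exact: measurable_funS mf.
  - move=> x; rewrite /= in_itv /= => /andP[a b]; rewrite lee_fin; apply/ltW/Hlow.
    rewrite ltr_norml; apply/andP; split; lra.
have fin : (\int[mu]_(x in A) (EFin \o horner (p * p)) x)%E \is a fin_num.
  apply: integrable_fin_num; [exact: measurable_itv | exact: int_poly].
move: I0; rewrite /Ip /Int0 /Rintegral => I0.
have pos : 0 < c/2 * ((s0 + e) - (s0 - e)) by apply: mulr_gt0; lra.
move: key; rewrite -(fineK fin) I0 lee_fin; lra.
Qed.

End Integrals.

Section LinAlg.
Variable R : realType.

Lemma sum_enum (T : finType) (F : T -> R) : \sum_z F z = \sum_(a < #|T|) F (enum_val a).
Proof. by rewrite -(big_enum_val (A := T)); apply: eq_bigl => z; rewrite inE. Qed.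

Lemma inj_lin_bound (T J : finType) (L : (T -> R) -> J -> R) :
  (forall a x y j, L (fun z => a * x z + y z) j = a * L x j + L y j) ->
  (forall x, (forall j, L x j = 0) -> forall z, x z = 0) ->
  exists C, 0 < C /\ forall x, \sum_z `|x z| <= C * \sum_j `|L x j|.
Proof.
move=> Llin Linj.
pose n := #|T|. pose m := #|J|.
pose toF (v : 'rV[R]_n) : T -> R := fun z => v 0 (enum_rank z).
pose F (v : 'rV[R]_n) : 'rV[R]_m := \row_b L (toF v) (enum_val b).
have F0 : F 0 = 0.
  apply/rowP => b; rewrite !mxE.
  have -> : toF 0 = fun z => -1 * toF 0 z + toF 0 z.
    by apply/funext => z; rewrite /toF mxE; lra.
  by rewrite Llin; lra.
have Flin : forall a u v, F (a *: u + v) = a *: F u + F v.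
  move=> a u v; apply/rowP => b; rewrite !mxE.
  have -> : toF (a *: u + v) = fun z => a * toF u z + toF v z.
    by apply/funext => z; rewrite /toF !mxE.
  by rewrite Llin.
have Fsum : forall (s : seq 'I_n) (c : 'I_n -> R) (e : 'I_n -> 'rV[R]_n),
    F (\sum_(a <- s) c a *: e a) = \sum_(a <- s) c a *: F (e a).
  move=> s c e; elim: s => [|a s IH]; first by rewrite !big_nil.
  by rewrite !big_cons Flin IH.
pose A : 'M[R]_(n, m) := \matrix_(a, b) F (delta_mx 0 a) 0 b.
have FA : forall v, v *m A = F v.
  move=> v; rewrite {2}(row_sum_delta v) Fsum; apply/rowP => b.
  rewrite !mxE summxE; apply: eq_bigr => a _; rewrite !mxE //.
have rf : row_free A.
  apply: inj_row_free => v; rewrite FA => Fv0.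
  have H : forall z, toF v z = 0.
    apply: Linj => j; have := congr1 (fun w : 'rV[R]_m => w 0 (enum_rank j)) Fv0.
    by rewrite !mxE enum_rankK.
  apply/rowP => a; rewrite mxE; have := H (enum_val a); by rewrite /toF enum_valK.
case/row_freeP: rf => B AB.
pose Mb := \sum_a \sum_b `|B b a|.
have Mb0 : 0 <= Mb by apply: sumr_ge0 => a _; apply: sumr_ge0 => b _.
exists (n%:R * Mb + 1); split.
  have := mulr_ge0 (ler0n _ n) Mb0; lra.
move=> x.
pose v : 'rV[R]_n := \row_a x (enum_val a).
have xv : toF v = x by apply/funext => z; rewrite /toF mxE enum_rankK.
have vE : v = F v *m B by rewrite -FA -mulmxA AB mulmx1.
have SL : \sum_j `|L x j| = \sum_b `|F v 0 b|.
  by rewrite sum_enum; apply: eq_bigr => b _; rewrite mxE xv.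
have SL0 : 0 <= \sum_j `|L x j| by apply: sumr_ge0.
have Sx : \sum_z `|x z| = \sum_a `|v 0 a|.
  by rewrite sum_enum; apply: eq_bigr => a _; rewrite mxE.
rewrite Sx.
have step : forall a, `|v 0 a| <= Mb * \sum_j `|L x j|.
  move=> a; rewrite vE mxE SL.
  apply: le_trans (ler_norm_sum _ _ _) _.
  rewrite mulr_sumr; apply: ler_sum => b _.
  rewrite normrM mulrC; apply: ler_wpM2r => //.
  rewrite /Mb (bigD1 a) //= (bigD1 b) //= -addrA ler_wpDr //.
  apply: addr_ge0; first by apply: sumr_ge0.
  by apply: sumr_ge0 => a' _; apply: sumr_ge0.
apply: le_trans (ler_sum _ (fun a _ => step a)) _.
rewrite sumr_const card_ord -[X in X <= _]mulr_natl mulrDl mul1r mulrA ler_wpDr //.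
Qed.

End LinAlg.


Section Vec.
Variable R : realType.
Implicit Types (u v w : 'rV[R]_3).

Lemma dot30 u : dot3 0 u = 0.
Proof. by rewrite /dot3 big1 // => c _; rewrite mxE mul0r. Qed.
Lemma dot3r0 u : dot3 u 0 = 0.
Proof. by rewrite /dot3 big1 // => c _; rewrite mxE mulr0. Qed.
Lemma dot3D u v w : dot3 (u + v) w = dot3 u w + dot3 v w.
Proof. by rewrite /dot3 -big_split; apply: eq_bigr => c _; rewrite mxE mulrDl. Qed.
Lemma dot3N u w : dot3 (- u) w = - dot3 u w.
Proof. by rewrite /dot3 -sumrN; apply: eq_bigr => c _; rewrite mxE mulNr. Qed.
Lemma dot3B u v w : dot3 (u - v) w = dot3 u w - dot3 v w.
Proof. by rewrite dot3D dot3N. Qed.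
Lemma dot3e a (c0 : 'I_3) w : dot3 (a *: 'e_c0) w = a * w 0 c0.
Proof.
rewrite /dot3 (bigD1 c0) //= big1 ?addr0 => [|c /negbTE ne]; rewrite !mxE ?eqxx ?ne /=.
  by rewrite mulr1.
by rewrite mulr0 mul0r.
Qed.
Lemma dot3C u v : dot3 u v = dot3 v u.
Proof. by apply: eq_bigr => c _; rewrite mulrC. Qed.

Lemma veval0 s : veval (fun _ => 0 : {poly R}) s = 0.
Proof. by apply/rowP => c; rewrite !mxE horner0. Qed.

Lemma veval_e (c0 : 'I_3) (p : {poly R}) s :
  veval (fun c => if c == c0 then p else 0) s = p.[s] *: 'e_c0.
Proof.
apply/rowP => c; rewrite !mxE; case: eqP => _ /=; first by rewrite mulr1.
by rewrite horner0 mulr0.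
Qed.

Lemma sqn3_ge0 u : 0 <= sqn3 u.
Proof. by apply: sumr_ge0 => c _; rewrite -expr2 sqr_ge0. Qed.

Lemma dot3_veval (f g : vpoly R) s :
  dot3 (veval f s) (veval g s) = (\sum_c f c * g c).[s].
Proof. by rewrite horner_sum; apply: eq_bigr => c _; rewrite !mxE hornerM. Qed.

Lemma Int0_zero (l : R) f : (forall s, f s = 0) -> Int0 l f = 0.
Proof.
move=> H; rewrite (@Int0_ext _ l f (horner 0)); last by move=> s; rewrite horner0.
by rewrite -/(Ip l 0) raddf0.
Qed.

End Vec.


Section Main.
Variable R : realType.
Variables (nV nE : nat) (src tgt : 'I_nE -> 'I_nV) (ell : 'I_nE -> R)
  (t : 'I_nE -> 'rV[R]_3) (k : nat).

Definition Ttype := ((('I_nE * bool) * 'I_3) * 'I_k.+2 + (('I_nV * bool) * 'I_3))%type.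
Definition Jtype := ((('I_nE * bool) * 'I_3) * 'I_k.+1 +
   ((('I_nE * bool) * bool) * 'I_3 + (bool * 'I_3)))%type.

Definition mvw (P : Mel R nV nE) (b : bool) i := if b then Mw P i else Mv P i.
Definition MVW (P : Mel R nV nE) (b : bool) j := if b then MW P j else MV P j.

Definition coords (P : Mel R nV nE) : Ttype -> R := fun z =>
  match z with
  | inl (i, b, c, m) => (mvw P b i c)`_m
  | inr (j, b, c) => MVW P b j 0 c
  end.

Definition psi (x : Ttype -> R) : Mel R nV nE :=
  mkMel (fun i c => \poly_(m < k.+2) x (inl (i, false, c, inord m)))
        (fun i c => \poly_(m < k.+2) x (inl (i, true, c, inord m)))
        (fun j => \row_c x (inr (j, false, c)))
        (fun j => \row_c x (inr (j, true, c))).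

Arguments psi : simpl never.

Definition zf : 'I_nE -> vpoly R := fun _ _ => 0.
Definition zr : 'I_nE -> 'rV[R]_3 := fun _ => 0.
Definition fv i0 c0 (p : {poly R}) : 'I_nE -> vpoly R :=
  fun i c => if (i == i0) && (c == c0) then p else 0.
Definition gv i0 (r : 'rV[R]_3) : 'I_nE -> 'rV[R]_3 := fun i => if i == i0 then r else 0.

Definition test (j : Jtype) (a : R) : Vel R nE :=
  match j with
  | inl (i0, b, c0, m) =>
      if b then mkVel (fv i0 c0 (a *: 'X^m)) zf zr zr zr zr 0 0
      else mkVel zf (fv i0 c0 (a *: 'X^m)) zr zr zr zr 0 0
  | inr (inl (i0, b, pl, c0)) =>
      let g := gv i0 (a *: 'e_c0) in
      match b, pl with
      | false, true => mkVel zf zf g zr zr zr 0 0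
      | false, false => mkVel zf zf zr g zr zr 0 0
      | true, true => mkVel zf zf zr zr g zr 0 0
      | true, false => mkVel zf zf zr zr zr g 0 0
      end
  | inr (inr (b, c0)) =>
      if b then mkVel zf zf zr zr zr zr 0 (a *: 'e_c0)
      else mkVel zf zf zr zr zr zr (a *: 'e_c0) 0
  end.

Definition pcross (u : 'rV[R]_3) (w : vpoly R) : vpoly R := fun c =>
  let x := fun j : nat => u 0 (inord j) in
  let y := fun j : nat => w (inord j) in
  [:: x 1%N *: y 2%N - x 2%N *: y 1%N;
      x 2%N *: y 0%N - x 0%N *: y 2%N;
      x 0%N *: y 1%N - x 1%N *: y 0%N]`_c.

Lemma pcrossE u w s c : (cross3 u (veval w s)) 0 c = (pcross u w c).[s].
Proof.
rewrite /cross3 /pcross mxE.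
by case: c => [[|[|[|//]]] ?] /=; rewrite !mxE !hornerE.
Qed.

Definition Lform (j : Jtype) (P : Mel R nV nE) : R :=
  match j with
  | inl (i, true, c, m) => - Ip (ell i) ('X^m * (Mw P i c)^`())
  | inl (i, false, c, m) => - Ip (ell i) ('X^m * ((Mv P i c)^`() + pcross (t i) (Mw P i) c))
  | inr (inl (i, false, true, c)) => (Mv P i c).[ell i] - MV P (tgt i) 0 c
  | inr (inl (i, false, false, c)) => MV P (src i) 0 c - (Mv P i c).[0]
  | inr (inl (i, true, true, c)) => (Mw P i c).[ell i] - MW P (tgt i) 0 c
  | inr (inl (i, true, false, c)) => MW P (src i) 0 c - (Mw P i c).[0]
  | inr (inr (false, c)) => \sum_i Ip (ell i) (Mv P i c)
  | inr (inr (true, c)) => \sum_i Ip (ell i) (Mw P i c)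
  end.



Lemma veval_zf i s : veval (zf i) s = 0.
Proof. exact: veval0. Qed.

Lemma veval_fv i0 c0 p i s :
  veval (fv i0 c0 p i) s = if i == i0 then p.[s] *: 'e_c0 else 0.
Proof.
rewrite /fv; case: eqP => _ /=; first exact: veval_e.
exact: veval0.
Qed.

Lemma sumzr2 (x y : 'I_nE -> 'rV[R]_3) :
  \sum_i (dot3 (zr i) (x i) - dot3 (zr i) (y i)) = 0.
Proof. by rewrite big1 // => i _; rewrite /zr !dot30 subr0. Qed.

Lemma sumgv1 i0 r (x y : 'I_nE -> 'rV[R]_3) :
  \sum_i (dot3 (gv i0 r i) (x i) - dot3 (zr i) (y i)) = dot3 r (x i0).
Proof.
rewrite (bigD1 i0) //= big1 => [|i /negbTE ne]; rewrite /gv /zr ?ne ?eqxx !dot30 ?subr0 ?addr0 //.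
Qed.

Lemma sumgv2 i0 r (x y : 'I_nE -> 'rV[R]_3) :
  \sum_i (dot3 (zr i) (x i) - dot3 (gv i0 r i) (y i)) = - dot3 r (y i0).
Proof.
rewrite (bigD1 i0) //= big1 => [|i /negbTE ne]; rewrite /gv /zr ?ne ?eqxx !dot30 ?subr0 ?sub0r ?addr0 //.
Qed.

Lemma Az (f : 'I_nE -> 'I_nV) j : \sum_(i | f i == j) zr i = 0.
Proof. by rewrite big1. Qed.

Lemma Agv (f : 'I_nE -> 'I_nV) i0 r j :
  \sum_(i | f i == j) gv i0 r i = if f i0 == j then r else 0.
Proof.
rewrite big_mkcond (bigD1 i0) //= big1 => [|i /negbTE ne]; rewrite /gv ?ne ?eqxx.
  by case: (f i0 == j); rewrite addr0.
by case: (f i == j).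
Qed.

Lemma sum_sel (f : 'I_nV) r (V : 'I_nV -> 'rV[R]_3) :
  \sum_j dot3 (if f == j then r else 0) (V j) = dot3 r (V f).
Proof.
rewrite (bigD1 f) //= big1 => [|j /negbTE ne]; rewrite ?eqxx ?addr0 //.
by rewrite eq_sym ne dot30.
Qed.

Lemma sumAz (V : 'I_nV -> 'rV[R]_3) :
  \sum_j dot3 (Aplus tgt zr j - Aminus src zr j) (V j) = 0.
Proof. by rewrite big1 // => j _; rewrite /Aplus /Aminus !Az subr0 dot30. Qed.

Lemma sumAp i0 r (V : 'I_nV -> 'rV[R]_3) :
  \sum_j dot3 (Aplus tgt (gv i0 r) j - Aminus src zr j) (V j) = dot3 r (V (tgt i0)).
Proof.
rewrite -sum_sel; apply: eq_bigr => j _.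
by rewrite /Aplus /Aminus Az Agv subr0.
Qed.

Lemma sumAm i0 r (V : 'I_nV -> 'rV[R]_3) :
  \sum_j dot3 (Aplus tgt zr j - Aminus src (gv i0 r) j) (V j) = - dot3 r (V (src i0)).
Proof.
rewrite -dot3N -sum_sel; apply: eq_bigr => j _.
rewrite /Aplus /Aminus Az Agv sub0r; by case: (src i0 == j); rewrite ?oppr0.
Qed.

Lemma sumInt_sel i0 (f : 'I_nE -> R -> R) :
  (forall i s, i != i0 -> f i s = 0) ->
  \sum_i Int0 (ell i) (f i) = Int0 (ell i0) (f i0).
Proof.
move=> H; rewrite (bigD1 i0) //= big1 ?addr0 // => i ne.
by apply: Int0_zero => s; apply: H.
Qed.

Lemma sumInt_z (f : 'I_nE -> R -> R) :
  (forall i s, f i s = 0) -> \sum_i Int0 (ell i) (f i) = 0.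
Proof. by move=> H; rewrite big1 // => i _; apply: Int0_zero. Qed.

Lemma dot3_vInt a c0 (f : 'I_nE -> vpoly R) :
  dot3 (a *: 'e_c0) (\sum_i vInt0 (ell i) (f i)) = a * \sum_i Ip (ell i) (f i c0).
Proof. by rewrite dot3e summxE; congr (_ * _); apply: eq_bigr => i _; rewrite mxE. Qed.

Lemma bform_test j a P : bform src tgt ell t (test j a) P = a * Lform j P.
Proof.
case: j => [[[[i0 b] c0] m]|[[[[i0 b] pl] c0]|[b c0]]].
- case: b; rewrite /bform /= !sumzr2 !sumAz !dot30 !subr0 !addr0.
  + rewrite (@sumInt_sel i0 _); last first.
      by move=> i s ne; rewrite veval_zf veval_fv (negbTE ne) !dot30 subr0 oppr0.
    rewrite (@Int0_ext _ _ _ (horner (- (a *: ('X^m * (Mw P i0 c0)^`()))))).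
      by rewrite -/(Ip _ _) IpN IpZ mulrN.
    move=> s; rewrite veval_zf veval_fv eqxx dot30 dot3e /vderiv mxE !hornerE.
    by rewrite oppr0 sub0r.
  + rewrite (@sumInt_sel i0 _); last first.
      by move=> i s ne; rewrite veval_zf veval_fv (negbTE ne) !dot30 subr0 oppr0.
    rewrite (@Int0_ext _ _ _ (horner (- (a *: ('X^m * ((Mv P i0 c0)^`() + pcross (t i0) (Mw P i0) c0)))))).
      by rewrite -/(Ip _ _) IpN IpZ mulrN.
    move=> s; rewrite veval_zf veval_fv eqxx dot30 dot3e mxE pcrossE /vderiv mxE !hornerE.
    by rewrite subr0.
- rewrite /bform; case: b; case: pl => /=;
    rewrite (sumInt_z (fun i s => _)) => [|i s]; try by rewrite !veval_zf !dot30 subr0 oppr0.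
  all: rewrite ?sumzr2 ?sumgv1 ?sumgv2 ?sumAz ?sumAp ?sumAm ?dot30 ?subr0 ?addr0 ?add0r.
  all: rewrite ?dot3N ?dot3e ?mxE /=; idtac.
  all: try ring.
- case: b; rewrite /bform /=;
    rewrite (sumInt_z (fun i s => _)) => [|i s]; try by rewrite !veval_zf !dot30 subr0 oppr0.
  all: rewrite !sumzr2 !sumAz ?dot30 !subr0 ?add0r ?addr0 dot3_vInt //.
Qed.

Section Lin.
Variables (a : R) (x y : Ttype -> R).
Let xl := fun z => a * x z + y z.

Lemma Mv_lin i : Mv (psi xl) i = fun c => a *: Mv (psi x) i c + Mv (psi y) i c.
Proof.
apply/funext => c; apply/polyP => m; rewrite /= coefD coefZ !coef_poly.
by case: ltnP => _ //; rewrite mulr0 addr0.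
Qed.
Lemma Mw_lin i : Mw (psi xl) i = fun c => a *: Mw (psi x) i c + Mw (psi y) i c.
Proof.
apply/funext => c; apply/polyP => m; rewrite /= coefD coefZ !coef_poly.
by case: ltnP => _ //; rewrite mulr0 addr0.
Qed.
Lemma MV_lin j : MV (psi xl) j = a *: MV (psi x) j + MV (psi y) j.
Proof. by apply/rowP => c; rewrite !mxE. Qed.
Lemma MW_lin j : MW (psi xl) j = a *: MW (psi x) j + MW (psi y) j.
Proof. by apply/rowP => c; rewrite !mxE. Qed.
End Lin.

Lemma pcross_lin u a (w1 w2 : vpoly R) c :
  pcross u (fun c => a *: w1 c + w2 c) c = a *: pcross u w1 c + pcross u w2 c.
Proof.
rewrite /pcross; case: c => [[|[|[|//]]] ?] /=;
  by apply/polyP => m; rewrite !(coefD, coefN, coefZ); ring.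
Qed.

Lemma poly_lin n (f g : nat -> R) a :
  \poly_(m < n) (a * f m + g m) = a *: \poly_(m < n) f m + \poly_(m < n) g m.
Proof.
apply/polyP => m; rewrite coefD coefZ !coef_poly.
by case: ltnP => _ //; rewrite mulr0 addr0.
Qed.

Lemma Lform_lin j a x y :
  Lform j (psi (fun z => a * x z + y z)) = a * Lform j (psi x) + Lform j (psi y).
Proof.
case: j => [[[[i b] c] m]|[[[[i b] pl] c]|[b c]]]; [case: b|case: b; case: pl|case: b];
  rewrite /Lform ?Mv_lin ?Mw_lin ?MV_lin ?MW_lin /=.
- by rewrite derivD derivZ mulrDr -scalerAr IpD IpZ; ring.
- by rewrite pcross_lin derivD derivZ addrACA -scalerDr mulrDr -scalerAr IpD IpZ; ring.
all: try by rewrite ?hornerD ?hornerZ !mxE; ring.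
- by under eq_bigr do rewrite poly_lin IpD IpZ; rewrite big_split -mulr_sumr.
- by under eq_bigr do rewrite poly_lin IpD IpZ; rewrite big_split -mulr_sumr.
Qed.
End Main.

Section Kernel.
Variable R : realType.

Lemma size_deriv_le (p : {poly R}) n : (size p <= n.+1)%N -> (size p^`() <= n)%N.
Proof.
move=> h; have [->|p0] := eqVneq p 0; first by rewrite deriv0 size_poly0.
by have := leq_trans (lt_size_deriv p0) h; rewrite ltnS.
Qed.

Lemma poly_small (r : {poly R}) n : (size r <= n)%N -> r = \sum_(m < n) r`_m *: 'X^m.
Proof.
move=> h; rewrite -poly_def; apply/polyP => i; rewrite coef_poly.
by case: ltnP => // hi; rewrite nth_default // (leq_trans h hi).
Qed.

Lemma deg_orth l (r : {poly R}) n : 0 < l -> (size r <= n)%N ->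
  (forall m : 'I_n, Ip l ('X^m * r) = 0) -> r = 0.
Proof.
move=> l0 hs H; apply: (Ip_sq_eq0 l0).
rewrite {1}(poly_small hs) mulr_suml Ip_sum big1 // => m _.
by rewrite -scalerAl IpZ H mulr0.
Qed.

Lemma deriv0_const (p : {poly R}) : p^`() = 0 -> p = (p`_0)%:P.
Proof.
move=> h; apply/polyP => i; rewrite coefC; case: i => [|i] //=.
have := congr1 (fun q : {poly R} => q`_i) h; rewrite coef_deriv coef0 => /eqP.
by rewrite mulrn_eq0 /= => /eqP.
Qed.

Lemma conn_const nV nE (src tgt : 'I_nE -> 'I_nV) (T : eqType) (f : 'I_nV -> T) :
  graph_connected src tgt -> (forall i, f (src i) = f (tgt i)) -> forall u v, f u = f v.
Proof.
move=> gc H u v.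
have cl : fingraph.closed (adj src tgt) [pred w | f w == f u].
  move=> x y /existsP[i /orP[/andP[/eqP sx /eqP ty]|/andP[/eqP sy /eqP tx]]] /=.
  - by rewrite !inE -sx -ty H.
  - by rewrite !inE -sy -tx H.
have := closed_connect cl (gc u v); rewrite !inE eqxx => /esym/eqP.
by move=> ->.
Qed.

Lemma pcross0 (u : 'rV[R]_3) c : pcross u (fun _ => 0) c = 0.
Proof. by rewrite /pcross; case: c => [[|[|[|//]]] ?] /=; rewrite !scaler0 subr0. Qed.


Lemma edge_vertex_zero nV nE (src tgt : 'I_nE -> 'I_nV) (ell : 'I_nE -> R)
    (u : 'I_nE -> vpoly R) (U : 'I_nV -> 'rV[R]_3) :
  graph_connected src tgt -> (0 < nE)%N -> (forall i, 0 < ell i) ->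
  (forall i c, (u i c)^`() = 0) ->
  (forall i c, (u i c).[ell i] = U (tgt i) 0 c) ->
  (forall i c, (u i c).[0] = U (src i) 0 c) ->
  (forall c, \sum_i Ip (ell i) (u i c) = 0) ->
  (forall i c, u i c = 0) /\ (forall j, U j = 0).
Proof.
move=> gc nE0 ell0 d0 ht hs hsum.
have uc : forall i c, u i c = (U (src i) 0 c)%:P.
  by move=> i c; have := deriv0_const (d0 i c); rewrite -horner_coef0 hs.
have st : forall i, U (src i) = U (tgt i).
  by move=> i; apply/rowP => c; rewrite -ht -hs uc !hornerC.
have Uc := conn_const gc st.
pose i0 : 'I_nE := Ordinal nE0.
pose j0 := src i0.
have IC : forall i c0, Ip (ell i) c0%:P = c0 * ell i := fun i c0 => IpC c0 (ltW (ell0 i)).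
have sp : 0 < \sum_i ell i.
  rewrite (bigD1 i0) //=; have := ell0 i0.
  have : 0 <= \sum_(i < nE | i != i0) ell i by apply: sumr_ge0 => i _; exact: ltW.
  lra.
have U0 : U j0 = 0.
  apply/rowP => c; rewrite mxE; have := hsum c.
  under eq_bigr do rewrite uc (Uc (src _) j0) IC.
  rewrite -mulr_sumr => /eqP; rewrite mulf_eq0 => /orP[/eqP //|/eqP h].
  by move: sp; rewrite h ltxx.
split.
  by move=> i c; rewrite uc (Uc _ j0) U0 mxE.
by move=> j; rewrite (Uc j j0).
Qed.

Lemma kernel nV nE (src tgt : 'I_nE -> 'I_nV) (ell : 'I_nE -> R) (t : 'I_nE -> 'rV[R]_3) k
    (P : Mel R nV nE) :
  graph_connected src tgt -> (0 < nE)%N -> (forall i, 0 < ell i) ->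
  in_Mn k.+1 P -> (forall j, Lform src tgt ell t (k := k) j P = 0) -> Mzero P.
Proof.
move=> gc nE0 ell0 inM HL.
have dw : forall i c, (Mw P i c)^`() = 0.
  move=> i c; apply: (@deg_orth (ell i) _ k.+1 (ell0 i)).
    exact: size_deriv_le ((inM i).2 c).
  move=> m; have := HL (inl (i, true, c, m)); rewrite /= => /eqP.
  by rewrite oppr_eq0 => /eqP.
have [wz Wz] := edge_vertex_zero gc nE0 ell0 dw
  (fun i c => subr0_eq (HL (inr (inl (i, true, true, c)))))
  (fun i c => esym (subr0_eq (HL (inr (inl (i, true, false, c))))))
  (fun c => HL (inr (inr (true, c)))).
have wfun : forall i, Mw P i = fun _ => 0 by move=> i; apply/funext => c; exact: wz.
have dv : forall i c, (Mv P i c)^`() = 0.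
  move=> i c; apply: (@deg_orth (ell i) _ k.+1 (ell0 i)).
    exact: size_deriv_le ((inM i).1 c).
  move=> m; have := HL (inl (i, false, c, m)); rewrite /= wfun pcross0 addr0 => /eqP.
  by rewrite oppr_eq0 => /eqP.
have [vz Vz] := edge_vertex_zero gc nE0 ell0 dv
  (fun i c => subr0_eq (HL (inr (inl (i, false, true, c)))))
  (fun i c => esym (subr0_eq (HL (inr (inl (i, false, false, c))))))
  (fun c => HL (inr (inr (false, c)))).
by split.
Qed.

End Kernel.

Section Bounds.
Variable R : realType.

Lemma horner_bound (p : {poly R}) n B L s : (size p <= n)%N ->
  (forall i, `|p`_i| <= B) -> 0 <= s <= L -> 1 <= L -> `|p.[s]| <= n%:R * B * L ^+ n.
Proof.
move=> hs hB /andP[s0 sL] L1.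
rewrite (horner_coef_wide s hs); apply: le_trans (ler_norm_sum _ _ _) _.
have H : forall i : 'I_n, `|p`_i * s ^+ i| <= B * L ^+ n.
  move=> i; rewrite normrM normrX (ger0_norm s0); apply: ler_pM => //.
    exact: exprn_ge0.
  apply: le_trans (_ : L ^+ i <= _).
    apply: lerXn2r => //; rewrite ?nnegrE //; lra.
  by apply: ler_weXn2l => //; apply: ltnW.
apply: le_trans (ler_sum _ (fun i _ => H i)) _.
by rewrite sumr_const card_ord -[X in X <= _]mulr_natl mulrA.
Qed.

Lemma deriv_coef_bound (p : {poly R}) n B : (size p <= n)%N ->
  (forall i, `|p`_i| <= B) -> forall i, `|(p^`())`_i| <= n%:R * B.
Proof.
move=> hs hB i; have B0 : 0 <= B by apply: le_trans (hB 0%N).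
rewrite coef_deriv -[p`_i.+1 *+ _]mulr_natl normrM normr_nat.
case: (leqP (size p) i.+1) => h.
  by rewrite nth_default // normr0 mulr0; apply: mulr_ge0.
apply: ler_pM => //; rewrite ler_nat; exact: ltnW (leq_trans h hs).
Qed.

Lemma L2sq_bound l (f : vpoly R) M : 0 <= l ->
  (forall c s, 0 <= s <= l -> `|(f c).[s]| <= M) -> L2sq l f <= 3%:R * M ^+ 2 * l.
Proof.
move=> l0 H.
rewrite /L2sq (@Int0_ext _ l _ (horner (\sum_c f c * f c))); last first.
  by move=> s; rewrite /sqn3 dot3_veval.
rewrite -/(Ip _ _) -IpC //; apply: Ip_le => s hs; rewrite horner_sum hornerC.
have -> : 3%:R * M ^+ 2 = \sum_(c < 3) M ^+ 2 by rewrite sumr_const card_ord mulr_natl.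
apply: ler_sum => c _; rewrite hornerM.
have := H c s hs; rewrite ler_norml => /andP[h1 h2]; nra.
Qed.

Lemma L2sq_ge0 l (f : vpoly R) : 0 <= l -> 0 <= L2sq l f.
Proof.
move=> l0; rewrite /L2sq /Int0; apply: Rintegral_ge0 => s _; exact: sqn3_ge0.
Qed.

Lemma sqn3_bound (u : 'rV[R]_3) S : (forall c, `|u 0 c| <= S) -> sqn3 u <= 3%:R * S ^+ 2.
Proof.
move=> H; have -> : 3%:R * S ^+ 2 = \sum_(c < 3) S ^+ 2 by rewrite sumr_const card_ord mulr_natl.
apply: ler_sum => c _; have := H c; rewrite ler_norml => /andP[h1 h2]; nra.
Qed.

Lemma term_le_sum (T : finType) (F : T -> R) z : (forall z, 0 <= F z) -> F z <= \sum_z F z.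
Proof.
move=> F0; rewrite (bigD1 z) //= lerDl; exact: sumr_ge0.
Qed.

End Bounds.

Section Pos.
Variable R : realType.

Lemma sum_ge0_eq0 (I : finType) (F : I -> R) : (forall i, 0 <= F i) ->
  \sum_i F i = 0 -> forall i, F i = 0.
Proof. by move=> F0 H i; apply: (psumr_eq0P (P := predT)). Qed.

Lemma Ip_sq_ge0 l (p : {poly R}) : 0 <= Ip l (p * p).
Proof.
by rewrite /Ip /Int0; apply: Rintegral_ge0 => s _; rewrite hornerM -expr2 sqr_ge0.
Qed.

Lemma L2sq_eq0 l (f : vpoly R) : 0 < l -> L2sq l f = 0 -> forall c, f c = 0.
Proof.
move=> l0 H c.
have E : L2sq l f = \sum_c0 Ip l (f c0 * f c0).
  rewrite /L2sq (@Int0_ext _ l _ (horner (\sum_c f c * f c))); last first.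
    by move=> s; rewrite /sqn3 dot3_veval.
  by rewrite -/(Ip _ _) Ip_sum.
apply: (Ip_sq_eq0 l0); move: H; rewrite E => H.
exact: (sum_ge0_eq0 (fun c0 => Ip_sq_ge0 l (f c0)) H c).
Qed.

Lemma sqn3_eq0 (u : 'rV[R]_3) : sqn3 u = 0 -> u = 0.
Proof.
move=> H; apply/rowP => c; rewrite mxE.
have F0 : forall c0, 0 <= u 0 c0 * u 0 c0 by move=> c0; rewrite -expr2 sqr_ge0.
by have := sum_ge0_eq0 F0 H c => /eqP; rewrite mulf_eq0 orbb => /eqP.
Qed.



Lemma normM_pos nV nE (ell : 'I_nE -> R) (P : Mel R nV nE) :
  (forall i, 0 < ell i) -> ~ Mzero P -> 0 < normM ell P.
Proof.
move=> ell0 nz; rewrite /normM sqrtr_gt0.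
have L0 : forall i f, 0 <= L2sq (ell i) f by move=> i f; apply: L2sq_ge0; apply: ltW.
have A0 : forall i, 0 <= H1sq (ell i) (Mv P i) + H1sq (ell i) (Mw P i).
  by move=> i; rewrite /H1sq; have := L0 i (Mv P i); have := L0 i (Mw P i);
     have := L0 i (vderiv (Mv P i)); have := L0 i (vderiv (Mw P i)); lra.
have B0 : forall j, 0 <= sqn3 (MV P j) + sqn3 (MW P j).
  by move=> j; have := sqn3_ge0 (MV P j); have := sqn3_ge0 (MW P j); lra.
have SA : 0 <= \sum_i (H1sq (ell i) (Mv P i) + H1sq (ell i) (Mw P i)) by apply: sumr_ge0 => i _.
have SB : 0 <= \sum_j (sqn3 (MV P j) + sqn3 (MW P j)) by apply: sumr_ge0 => j _.
rewrite lt_neqAle addr_ge0 // andbT; apply/eqP => H.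
apply: nz.
have hA : \sum_i (H1sq (ell i) (Mv P i) + H1sq (ell i) (Mw P i)) = 0 by lra.
have hB : \sum_j (sqn3 (MV P j) + sqn3 (MW P j)) = 0 by lra.
have e1 := sum_ge0_eq0 A0 hA; have e2 := sum_ge0_eq0 B0 hB.
split => [i c|i c|j|j].
- apply: (L2sq_eq0 (ell0 i)); move: (e1 i); rewrite /H1sq.
  have := L0 i (Mv P i); have := L0 i (Mw P i);
  have := L0 i (vderiv (Mv P i)); have := L0 i (vderiv (Mw P i)); lra.
- apply: (L2sq_eq0 (ell0 i)); move: (e1 i); rewrite /H1sq.
  have := L0 i (Mv P i); have := L0 i (Mw P i);
  have := L0 i (vderiv (Mv P i)); have := L0 i (vderiv (Mw P i)); lra.
- apply: sqn3_eq0; move: (e2 j); have := sqn3_ge0 (MV P j); have := sqn3_ge0 (MW P j); lra.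
- apply: sqn3_eq0; move: (e2 j); have := sqn3_ge0 (MV P j); have := sqn3_ge0 (MW P j); lra.
Qed.

Lemma normV_pos nE (ell : 'I_nE -> R) (S : Vel R nE) :
  (forall i, 0 < ell i) -> ~ Vzero S -> 0 < normV ell S.
Proof.
move=> ell0 nz; rewrite /normV sqrtr_gt0.
have L0 : forall i f, 0 <= L2sq (ell i) f by move=> i f; apply: L2sq_ge0; apply: ltW.
have A0 : forall i, 0 <= L2sq (ell i) (Vq S i) + L2sq (ell i) (Vp S i).
  by move=> i; have := L0 i (Vq S i); have := L0 i (Vp S i); lra.
have B0 : forall i, 0 <= sqn3 (VPp S i) + sqn3 (VPm S i) + sqn3 (VQp S i) + sqn3 (VQm S i).
  by move=> i; have := sqn3_ge0 (VPp S i); have := sqn3_ge0 (VPm S i);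
     have := sqn3_ge0 (VQp S i); have := sqn3_ge0 (VQm S i); lra.
have SA : 0 <= \sum_i (L2sq (ell i) (Vq S i) + L2sq (ell i) (Vp S i)) by apply: sumr_ge0 => i _.
have SB : 0 <= \sum_i (sqn3 (VPp S i) + sqn3 (VPm S i) + sqn3 (VQp S i) + sqn3 (VQm S i)) by apply: sumr_ge0 => i _.
have a0 := sqn3_ge0 (Valpha S); have b0 := sqn3_ge0 (Vbeta S).
rewrite lt_neqAle !addr_ge0 // andbT; apply/eqP => H.
apply: nz.
have hA : \sum_i (L2sq (ell i) (Vq S i) + L2sq (ell i) (Vp S i)) = 0 by lra.
have hB : \sum_i (sqn3 (VPp S i) + sqn3 (VPm S i) + sqn3 (VQp S i) + sqn3 (VQm S i)) = 0 by lra.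
have e1 := sum_ge0_eq0 A0 hA; have e2 := sum_ge0_eq0 B0 hB.
have pp : forall i, [/\ sqn3 (VPp S i) = 0, sqn3 (VPm S i) = 0, sqn3 (VQp S i) = 0 & sqn3 (VQm S i) = 0].
  move=> i; move: (e2 i); have := sqn3_ge0 (VPp S i); have := sqn3_ge0 (VPm S i);
  have := sqn3_ge0 (VQp S i); have := sqn3_ge0 (VQm S i).
  by move=> *; split; lra.
split; [|split; [|split; [|split; [|split; [|split; [|split]]]]]].
- move=> i c; apply: (L2sq_eq0 (ell0 i)); move: (e1 i).
  have := L0 i (Vq S i); have := L0 i (Vp S i); lra.
- move=> i c; apply: (L2sq_eq0 (ell0 i)); move: (e1 i).
  have := L0 i (Vq S i); have := L0 i (Vp S i); lra.
- by move=> i; apply: sqn3_eq0; case: (pp i).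
- by move=> i; apply: sqn3_eq0; case: (pp i).
- by move=> i; apply: sqn3_eq0; case: (pp i).
- by move=> i; apply: sqn3_eq0; case: (pp i).
- by apply: sqn3_eq0; lra.
- by apply: sqn3_eq0; lra.
Qed.

End Pos.

Section Final.
Variable R : realType.
Variables (nV nE : nat) (src tgt : 'I_nE -> 'I_nV) (ell : 'I_nE -> R)
  (t : 'I_nE -> 'rV[R]_3) (k : nat).

Lemma psi_coords (P : Mel R nV nE) : in_Mn k.+1 P -> psi (coords (k := k) P) = P.
Proof.
case: P => v w V W inM; rewrite /psi /=; congr mkMel.
- apply/funext => i; apply/funext => c; apply/polyP => m; rewrite coef_poly.
  case: ltnP => h /=; first by rewrite inordK.
  by rewrite nth_default //; apply: leq_trans h; exact: ((inM i).1 c).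
- apply/funext => i; apply/funext => c; apply/polyP => m; rewrite coef_poly.
  case: ltnP => h /=; first by rewrite inordK.
  by rewrite nth_default //; apply: leq_trans h; exact: ((inM i).2 c).
- by apply/funext => j; apply/rowP => c; rewrite mxE.
- by apply/funext => j; apply/rowP => c; rewrite mxE.
Qed.


Lemma psi_inM (x : Ttype nV nE k -> R) : in_Mn k.+1 (psi x).
Proof. by move=> i; split => c; apply: size_poly. Qed.

Lemma kernel_x : graph_connected src tgt -> (0 < nE)%N -> (forall i, 0 < ell i) ->
  forall x : Ttype nV nE k -> R, (forall j, Lform src tgt ell t (k := k) j (psi x) = 0) -> forall z, x z = 0.
Proof.
move=> gc nE0 ell0 x H.
have [vz wz Vz Wz] := kernel gc nE0 ell0 (psi_inM x) H.
case => [[[[i b] c] m]|[[j b] c]].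
- case: b.
  + have := wz i c; rewrite /psi /= => /(congr1 (fun p : {poly R} => p`_m)).
    by rewrite coef_poly ltn_ord inord_val coef0.
  + have := vz i c; rewrite /psi /= => /(congr1 (fun p : {poly R} => p`_m)).
    by rewrite coef_poly ltn_ord inord_val coef0.
- case: b.
  + have := Wz j; rewrite /psi /= => /(congr1 (fun r : 'rV[R]_3 => r 0 c)).
    by rewrite !mxE.
  + have := Vz j; rewrite /psi /= => /(congr1 (fun r : 'rV[R]_3 => r 0 c)).
    by rewrite !mxE.
Qed.


Lemma normM_bound : (forall i, 0 < ell i) -> exists K, 0 < K /\
  forall P : Mel R nV nE, in_Mn k.+1 P -> normM ell P <= K * \sum_z `|coords (k := k) P z|.
Proof.
move=> ell0.
pose L := 1 + \sum_i ell i.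
have ellL : forall i, ell i <= L.
  move=> i; rewrite /L (bigD1 i) //=.
  have : 0 <= \sum_(j < nE | j != i) ell j by apply: sumr_ge0 => j _; exact: ltW.
  lra.
have L1 : 1 <= L.
  rewrite /L; have : 0 <= \sum_i ell i by apply: sumr_ge0 => j _; exact: ltW.
  lra.
have Lp0 : 0 <= L ^+ k.+2 by apply: exprn_ge0; lra.
pose a := (k.+2)%:R : R.
have a1 : 1 <= a by rewrite /a ler1n.
pose c1 := a ^+ 2 * L ^+ k.+2.
have c10 : 0 <= c1 by apply: mulr_ge0 => //; apply: exprn_ge0; lra.
pose K2 := nE%:R * (12%:R * c1 ^+ 2 * L) + nV%:R * 6%:R.
have K20 : 0 <= K2.
  apply: addr_ge0; apply: mulr_ge0 => //; apply: mulr_ge0 => //; first apply: mulr_ge0 => //.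
  exact: exprn_ge0.
  lra.
exists (Num.sqrt K2 + 1); split; first by have := sqrtr_ge0 K2; lra.
move=> P inM; set S := \sum_z _.
have S0 : 0 <= S by apply: sumr_ge0.
have hc : forall b i c m, `|(mvw P b i c)`_m| <= S.
  move=> b i c m; case: (ltnP m k.+2) => h.
    have -> : (mvw P b i c)`_m = coords (k := k) P (inl (i, b, c, Ordinal h)) by [].
    by rewrite /S; apply: term_le_sum => z.
  rewrite nth_default ?normr0 //; apply: leq_trans h.
  by case: b; [exact: (inM i).2 c | exact: (inM i).1 c].
have hV : forall b j c, `|MVW P b j 0 c| <= S.
  move=> b j c; have -> : MVW P b j 0 c = coords (k := k) P (inr (j, b, c)) by [].
  by rewrite /S; apply: term_le_sum => z.
have hsz : forall b i c, (size (mvw P b i c) <= k.+2)%N.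
  by move=> b i c; case: b; [exact: (inM i).2 c | exact: (inM i).1 c].
have hM : forall b i c s, 0 <= s <= ell i ->
    `|(mvw P b i c).[s]| <= c1 * S /\ `|((mvw P b i c)^`()).[s]| <= c1 * S.
  move=> b i c s /andP[s0 sl].
  have sL : 0 <= s <= L by rewrite s0 /=; apply: le_trans sl (ellL i).
  have aa : a <= a ^+ 2 by apply: ler_eXnr.
  have SL := mulr_ge0 S0 Lp0.
  split.
    apply: le_trans (horner_bound (hsz b i c) (hc b i c) sL L1) _.
    rewrite -/a /c1; nra.
  have hd := deriv_coef_bound (hsz b i c) (hc b i c).
  have hsd : (size (mvw P b i c)^`() <= k.+2)%N.
    by apply: leqW; apply: size_deriv_le.
  apply: le_trans (horner_bound hsd hd sL L1) _.
  rewrite -/a /c1; nra.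
have hH : forall b i, H1sq (ell i) (mvw P b i) <= 6%:R * (c1 * S) ^+ 2 * L.
  move=> b i; rewrite /H1sq.
  have l0 : 0 <= ell i by apply: ltW.
  have h1 := L2sq_bound l0 (fun c s hs => (hM b i c s hs).1).
  have h2 := L2sq_bound (f := vderiv (mvw P b i)) l0 (fun c s hs => (hM b i c s hs).2).
  have M0 : 0 <= (c1 * S) ^+ 2 by apply: sqr_ge0.
  have := ellL i; nra.
have hsq : forall b j, sqn3 (MVW P b j) <= 3%:R * S ^+ 2 by move=> b j; apply: sqn3_bound => c; exact: hV.
have arg : \sum_i (H1sq (ell i) (Mv P i) + H1sq (ell i) (Mw P i)) +
           \sum_j (sqn3 (MV P j) + sqn3 (MW P j)) <= K2 * S ^+ 2.
  have e1 : \sum_i (H1sq (ell i) (Mv P i) + H1sq (ell i) (Mw P i)) <=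
            \sum_(i < nE) (12%:R * (c1 * S) ^+ 2 * L).
    apply: ler_sum => i _; have := hH false i; have := hH true i; rewrite /mvw /=; lra.
  have e2 : \sum_j (sqn3 (MV P j) + sqn3 (MW P j)) <= \sum_(j < nV) (6%:R * S ^+ 2).
    apply: ler_sum => j _; have := hsq false j; have := hsq true j; rewrite /MVW /=; lra.
  rewrite !sumr_const !card_ord !mulr_natl in e1 e2.
  have -> : K2 * S ^+ 2 = nE%:R * (12%:R * (c1 * S) ^+ 2 * L) + nV%:R * (6%:R * S ^+ 2).
    by rewrite /K2; ring.
  lra.
rewrite /normM; apply: le_trans (ler_wsqrtr arg) _.
rewrite sqrtrM // sqrtr_sqr ger0_norm //.
have := sqrtr_ge0 K2; nra.
Qed.

End Final.

Section Tests.
Variable R : realType.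
Variables (nE k : nat).

Lemma test_inVk (j : Jtype nE k) (a : R) : in_Vk k (test j a).
Proof.
have z : forall i, vdeg_le k (@zf R nE i) by move=> i c; rewrite size_poly0.
have f : forall (i0 : 'I_nE) (c0 : 'I_3) (m : 'I_k.+1) (i : 'I_nE), vdeg_le k (fv i0 c0 (a *: 'X^m) i).
  move=> i0 c0 m i c; rewrite /fv; case: ((i == i0) && (c == c0)); last by rewrite size_poly0.
  by apply: leq_trans (size_scale_leq _ _) _; rewrite size_polyXn.
case: j => [[[[i0 b] c0] m]|[[[[i0 b] pl] c0]|[b c0]]] i.
- by case: b; split; rewrite /=; (apply: f || apply: z).
- by case: b; case: pl; split; rewrite /=; apply: z.
- by case: b; split; rewrite /=; (apply: f || apply: z).
Qed.

Lemma test_nz (j : Jtype nE k) (a : R) : a != 0 -> ~ Vzero (test j a).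
Proof.
move=> a0.
have ve : forall c0 : 'I_3, (a *: 'e_c0 : 'rV[R]_3) != 0.
  move=> c0; apply/eqP => /(congr1 (fun r : 'rV[R]_3 => r 0 c0)); rewrite !mxE !eqxx /= mulr1.
  by apply/eqP.
have pe : forall (m : nat), (a *: 'X^m : {poly R}) != 0.
  move=> m; apply/eqP => /(congr1 (fun p : {poly R} => p`_m)); rewrite coefZ coefXn eqxx mulr1 coef0.
  by apply/eqP.
case: j => [[[[i0 b] c0] m]|[[[[i0 b] pl] c0]|[b c0]]].
- case: b => -[hq [hp _]].
  + by have := hq i0 c0; rewrite /= /fv !eqxx /=; apply/eqP.
  + by have := hp i0 c0; rewrite /= /fv !eqxx /=; apply/eqP.
- case: b; case: pl => -[_ [_ [h1 [h2 [h3 [h4 _]]]]]].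
  + by have := h3 i0; rewrite /= /gv eqxx; apply/eqP.
  + by have := h4 i0; rewrite /= /gv eqxx; apply/eqP.
  + by have := h1 i0; rewrite /= /gv eqxx; apply/eqP.
  + by have := h2 i0; rewrite /= /gv eqxx; apply/eqP.
- case: b => -[_ [_ [_ [_ [_ [_ [ha hb]]]]]]].
  + by move: hb => /= /eqP; apply/negP; apply: ve.
  + by move: ha => /= /eqP; apply/negP; apply: ve.
Qed.

End Tests.

Unset Implicit Arguments.

Theorem corollary4p4 (R : realType) (nV nE : nat)
    (src tgt : 'I_nE -> 'I_nV) (X : 'I_nV -> 'rV[R]_3)
    (ell : 'I_nE -> R) (t : 'I_nE -> 'rV[R]_3) (k : nat) :
  (0 < nE)%N ->
  graph_connected src tgt ->
  straight_struts src tgt X ell t ->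
  exists kd : R, 0 < kd /\
    forall P : Mel R nV nE, in_Mn k.+1 P -> ~ Mzero P ->
      (kd%:E <= sup_ratio k src tgt ell t P)%E.
Proof.
move=> nE0 gc ss.
have ell0 : forall i, 0 < ell i by move=> i; case: (ss i).
pose L := fun (x : Ttype nV nE k -> R) (j : Jtype nE k) => Lform src tgt ell t j (psi x).
have [C [C0 HC]] := @inj_lin_bound R _ _ L (fun a x y j => Lform_lin src tgt ell t j a x y)
  (fun x H => kernel_x gc nE0 ell0 H).
have [K [K0 HK]] := normM_bound nV k ell0.
pose NB := \sum_(j : Jtype nE k) (normV ell (test j 1) + normV ell (test j (-1))).
have nvpos : forall (j : Jtype nE k) (a : R), a != 0 -> 0 < normV ell (test j a).
  by move=> j a a0; apply: normV_pos => //; exact: test_nz.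
have nvge : forall (j : Jtype nE k), 0 <= normV ell (test j 1) + normV ell (test j (-1)).
  move=> j; apply: addr_ge0; apply: ltW; apply: nvpos; rewrite ?oppr_eq0 oner_eq0 //.
have nvle : forall (j : Jtype nE k) (a : R), (a = 1 \/ a = -1) -> normV ell (test j a) <= NB.
  move=> j a ha; apply: le_trans (term_le_sum j nvge).
  have h1 := nvpos j 1 (oner_neq0 _).
  have h2 : 0 < normV ell (test j (-1)) by apply: nvpos; rewrite oppr_eq0 oner_eq0.
  by case: ha => ->; lra.
pose j0 : Jtype nE k := inr (inr (false, ord0)).
have NB0 : 0 < NB.
  apply: lt_le_trans (nvpos j0 1 (oner_neq0 _)) _; apply: nvle; by left.
pose nJ : R := \sum_(j : Jtype nE k) 1.
have nJ0 : 0 < nJ.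
  apply: lt_le_trans ltr01 _; apply: (@term_le_sum _ _ (fun _ => 1) j0) => _; exact: ler01.
pose D := NB * K * C * nJ.
have D0 : 0 < D by rewrite /D !mulr_gt0.
exists (D^-1); split; first by rewrite invr_gt0.
move=> P inM nzP.
pose x := coords (k := k) P.
have Px : psi x = P := psi_coords inM.
have LP : forall j, L x j = Lform src tgt ell t j P by move=> j; rewrite /L Px.
pose f := fun j => `|Lform src tgt ell t (k := k) j P|.
case: (@arg_maxP _ R (Jtype nE k) j0 predT f isT) => jm _ Hjm.
set bj := Lform src tgt ell t jm P.
have sumle : \sum_j `|L x j| <= nJ * `|bj|.
  rewrite /nJ mulr_suml; apply: ler_sum => j _; rewrite LP mul1r; exact: Hjm.
have Sx := HC x.
have nM := HK P inM.
have nMpos := normM_pos ell0 nzP.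
pose a : R := if 0 <= bj then 1 else -1.
have ha : a = 1 \/ a = -1 by rewrite /a; case: ifP => _; [left|right].
have abj : a * bj = `|bj|.
  rewrite /a; case: ifP => h; first by rewrite mul1r ger0_norm.
  by rewrite mulN1r ler0_norm //; apply: ltW; rewrite ltNge h.
pose Sg := test jm a.
have bS : bform src tgt ell t Sg P = `|bj| by rewrite /Sg bform_test abj.
have a0 : a != 0 by case: ha => ->; rewrite ?oppr_eq0 oner_eq0.
have nS0 : 0 < normV ell Sg := nvpos jm a a0.
have nSle : normV ell Sg <= NB := nvle jm a ha.
have nMle : normM ell P <= K * (C * (nJ * `|bj|)).
  apply: le_trans nM _; apply: ler_wpM2l; first exact: ltW.
  apply: le_trans Sx _; apply: ler_wpM2l; first exact: ltW.
  exact: sumle.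
have prod : normV ell Sg * normM ell P <= D * `|bj|.
  have -> : D * `|bj| = NB * (K * (C * (nJ * `|bj|))) by rewrite /D; ring.
  apply: ler_pM => //; [exact: ltW | exact: ltW].
apply: (@le_trans _ _ ((bform src tgt ell t Sg P / (normV ell Sg * normM ell P))%:E)).
  rewrite lee_fin bS ler_pdivlMr ?mulr_gt0 //.
  have Di : 0 <= D^-1 by rewrite invr_ge0; exact: ltW.
  apply: le_trans (ler_wpM2l Di prod) _.
  by rewrite mulrA mulVf ?gt_eqF // mul1r.
apply: ereal_sup_ubound; exists Sg => //; split.
  exact: test_inVk.
exact: test_nz.
Qed.
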